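(* Let $\mathcal{T}_1=(V,\mathsf{p}_1)$ and $\mathcal{T}_2=(V,\mathsf{p}_2)$ be directed forests such that $\mathcal{T}_1$ is thinner than $\mathcal{T}_2$. Then: (a) $\mathrm{Chi}^{\langle k\rangle}_{\mathcal{T}_1}(v)\subseteq\mathrm{Chi}^{\langle k\rangle}_{\mathcal{T}_2}(v)$ for all $v\in V$ and $k\in\mathbb{N}$; (b) $\mathrm{root}(\mathcal{T}_1)\supseteq\mathrm{root}(\mathcal{T}_2)$; (c) every tree in $\mathcal{T}_1$ is contained in some tree in $\mathcal{T}_2$; in particular, the number of trees in $\mathcal{T}_2$ is less than or equal to the number of trees in $\mathcal{T}_1$; (d) every tree in $\mathcal{T}_2$ contains exactly one tree of $\mathcal{T}_1$ if and only if $\mathcal{T}_1=\mathcal{T}_2$; in particular, a directed forest strictly thinner than a directed tree is never a directed tree.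
   Context: A directed forest is a pair $\mathcal{T}=(V,\mathsf{p})$ where $V$ is a nonempty set and $\mathsf{p}\colon V\to V$ satisfies: if $n\in\mathbb{N}$, $v\in V$ and $\mathsf{p}^n(v)=v$, then $\mathsf{p}(v)=v$. Roots: $\mathrm{root}(\mathcal{T})=\{v:\mathsf{p}(v)=v\}$. For $k\in\mathbb{N}$, the $k$-th children of $v$ are $\mathrm{Chi}^{\langle k\rangle}_{\mathcal{T}}(v)=\{u\in V:\mathsf{p}^k(u)=v\neq\mathsf{p}^{k-1}(u)\}$ (with $\mathsf{p}^0=\mathrm{id}_V$). The trees of $\mathcal{T}$ are the connected components of the graph on $V$ with edges $\{\mathsf{p}(u),u\}$ for $u\notin\mathrm{root}(\mathcal{T})$ (equivalently, classes of $u\sim w$ iff $\mathsf{p}^m(u)=\mathsf{p}^n(w)$ for some $m,n\ge0$); a directed tree is a directed forest with exactly one tree. $\mathcal{T}_1$ is thinner than $\mathcal{T}_2$ if $\mathsf{p}_1(v)\in\{v,\mathsf{p}_2(v)\}$ for all $v\in V$; ''strictly thinner'' means thinner and different. *)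

(* Defs.v *)
From mathcomp Require Import all_boot.
From mathcomp Require Import boolp classical_sets functions cardinality.
Set Implicit Arguments. Unset Strict Implicit. Unset Printing Implicit Defensive.
Local Open Scope classical_set_scope.

(* Here ℕ = {1,2,...}: the paper's condition with n = 0 would be vacuous-breaking. *)
Definition directed_forest (V : Type) (p : V -> V) : Prop :=
  inhabited V /\ (forall (n : nat) (v : V), (0 < n)%N -> iter n p v = v -> p v = v).

Definition root_of (V : Type) (p : V -> V) : set V := [set v | p v = v].

Definition Chi (V : Type) (p : V -> V) (k : nat) (v : V) : set V :=
  [set u | iter k p u = v /\ v <> iter k.-1 p u].

Definition same_tree (V : Type) (p : V -> V) (u w : V) : Prop :=
  exists m n : nat, iter m p u = iter n p w.

Definition trees (V : Type) (p : V -> V) : set (set V) :=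
  [set A | exists v : V, A = [set u | same_tree p v u]].

Definition directed_tree (V : Type) (p : V -> V) : Prop :=
  directed_forest p /\ exists! A : set V, trees p A.

Definition thinner (V : Type) (p1 p2 : V -> V) : Prop :=
  forall v : V, p1 v = v \/ p1 v = p2 v.

(* Main.v *)
Require Import Defs.
From mathcomp Require Import all_boot.
From mathcomp Require Import boolp classical_sets functions cardinality.
Local Open Scope classical_set_scope.

Section H.
Local Set Implicit Arguments.
Variable V : Type.

Lemma st_refl (p : V -> V) u : same_tree p u u.
Proof. by exists 0, 0. Qed.

Lemma st_sym (p : V -> V) u w : same_tree p u w -> same_tree p w u.
Proof. by move=> [m [n e]]; exists n, m. Qed.

Lemma st_trans (p : V -> V) x y z :
  same_tree p x y -> same_tree p y z -> same_tree p x z.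
Proof.
move=> [a [b e1]] [c [d e2]]; exists (a + c), (d + b).
rewrite [a + c]addnC [d + b]addnC !iterD e1 -e2 -!iterD.
by rewrite addnC.
Qed.

Lemma iter_fix (p : V -> V) x n : p x = x -> iter n p x = x.
Proof. by move=> h; elim: n => //= n ->. Qed.

Lemma thin_iter (p1 p2 : V -> V) : thinner p1 p2 ->
  forall m x, exists j, iter m p1 x = iter j p2 x.
Proof.
move=> th; elim=> [|m IH] x; first by exists 0.
have [j e] := IH x; rewrite iterS e.
case: (th (iter j p2 x)) => ->; first by exists j.
by exists j.+1.
Qed.

Lemma st12 (p1 p2 : V -> V) u w : thinner p1 p2 ->
  same_tree p1 u w -> same_tree p2 u w.
Proof.
move=> th [m [n e]].
have [a ea] := thin_iter th m u; have [b eb] := thin_iter th n w.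
by exists a, b; rewrite -ea -eb.
Qed.

Lemma agree (p1 p2 : V -> V) u : thinner p1 p2 -> forall k,
  (forall j, (j < k)%N -> p1 (iter j p1 u) <> iter j p1 u) ->
  iter k p1 u = iter k p2 u.
Proof.
move=> th; elim=> [|k IH] h //=.
rewrite -IH; last by move=> j hj; apply: h; exact: ltnW.
by case: (th (iter k p1 u)) => // /h; rewrite ltnSn => /(_ isT).
Qed.
End H.

Theorem lemma3p6 (V : Type) (p1 p2 : V -> V) :
  directed_forest p1 -> directed_forest p2 -> thinner p1 p2 ->
  (* (a) *)
  (forall (v : V) (k : nat), (0 < k)%N -> Chi p1 k v `<=` Chi p2 k v) /\
  (* (b) *)
  (root_of p2 `<=` root_of p1) /\
  (* (c) *)
  ((forall A, trees p1 A -> exists2 B, trees p2 B & A `<=` B) /\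
   (trees p2 #<= trees p1)%card) /\
  (* (d) *)
  (((forall B, trees p2 B -> exists! A, trees p1 A /\ A `<=` B) <-> p1 = p2) /\
   (directed_tree p2 -> p1 <> p2 -> ~ directed_tree p1)).
Proof.
move=> [_ f1] [_ f2] th.
have two : p1 <> p2 -> exists v w, p2 v = w /\ ~ same_tree p1 v w.
  move=> ne; apply: contra_notP ne => H; apply: funext => v.
  case: (th v) => // e1; apply: contra_notP H => ne.
  exists v, (p2 v); split => //.
  move=> [m [n e]]; rewrite iter_fix // in e.
  have [j ej] := thin_iter th n (p2 v).
  rewrite ej -iterSr in e.
  by apply: ne; rewrite e1; apply/esym/(f2 j.+1 v isT)/esym.
have tr_sub : forall v, [set u | same_tree p1 v u] `<=` [set u | same_tree p2 v u].
  by move=> v u; apply: st12.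
have tr_eq : forall (p : V -> V) v w, same_tree p v w ->
    [set u | same_tree p v u] = [set u | same_tree p w u].
  move=> p v w h; apply/seteqP; split => u /= h'.
    exact: st_trans (st_sym h) h'.
  exact: st_trans h h'.
have distinct : forall v w, ~ same_tree p1 v w ->
    [set u | same_tree p1 v u] <> [set u | same_tree p1 w u].
  move=> v w n E; apply: n.
  have : [set u | same_tree p1 w u] w by exact: st_refl.
  by rewrite -E.
split.
  move=> v k k0 u [e ne].
  have nofix : forall j, (j < k)%N -> p1 (iter j p1 u) <> iter j p1 u.
    move=> j jk fx; apply: ne.
    have hj : (j <= k.-1)%N by rewrite -ltnS prednK.
    have e1 : iter k p1 u = iter j p1 u.
      by rewrite -(subnK (ltnW jk)) iterD iter_fix.
    have e2 : iter k.-1 p1 u = iter j p1 u.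
      by rewrite -(subnK hj) iterD iter_fix.
    by rewrite -e e1 e2.
  have ag := fun u => agree u th.
  split; first by rewrite -(ag u k nofix).
  rewrite -(ag u k.-1); first by [].
  move=> j jk; apply: nofix; exact: (leq_trans jk (leq_pred k)).
split.
  move=> v; rewrite /root_of /= => h.
  by case: (th v) => ->.
split; first split.
    move=> A [v ->]; exists [set u | same_tree p2 v u]; first by exists v.
    exact: tr_sub.
  pose f := fun A : set V => [set u | exists2 a, A a & same_tree p2 a u].
  apply: (card_le_trans _ (card_image_le f (trees p1))).
  apply: subset_card_le => B [v ->].
  exists [set u | same_tree p1 v u]; first by exists v.
  apply/seteqP; split => u /=.
    move=> [a ha hau]; exact: st_trans (tr_sub _ _ ha) hau.
  move=> h; exists v => //; exact: st_refl.
have sub2 : forall v w, p2 v = w ->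
    [set u | same_tree p1 w u] `<=` [set u | same_tree p2 v u].
  move=> v w e u /= h; apply: st_trans (st12 th h).
  by exists 1, 0.
split; first split.
    move=> H; apply: contrapT => ne.
    have [v [w [e nst]]] := two ne.
    have [A [[hA hAB] uq]] := H [set u | same_tree p2 v u] (ex_intro _ v erefl).
    apply: (distinct v w nst).
    rewrite -(uq [set u | same_tree p1 v u]); last by split; [exists v | exact: tr_sub].
    rewrite -(uq [set u | same_tree p1 w u]) //; split; [by exists w | exact: sub2].
  move=> <- B [v ->]; exists [set u | same_tree p1 v u]; split.
    by split; [exists v | ].
  move=> A' [[w ->] sub]; apply: tr_eq; apply: sub; exact: st_refl.
move=> [_ [B [tB uB]]] ne [_ [A [tA uA]]].
have [v [w [e nst]]] := two ne.
apply: (distinct v w nst).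
by rewrite -(uA [set u | same_tree p1 v u]) ?(uA [set u | same_tree p1 w u]) //;
  [exists w | exists v].
Qed.
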